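(* Let $n$ be a nonnegative integer and let $a,b,c\in\mathbb{C}$ be such that all hypergeometric series and quotients below are defined (no lower parameter is zero or a negative integer). Then \[ {}_4F_3\!\left(\left.{-n,\frac{a}{2},\frac{a+1}{2},b \atop a,1+a-c,c}\right| 4\right) =\frac{(-1)^n(b)_n}{(1+a-c)_n}\, {}_4F_3\!\left(\left.{-n,\frac{c-b-n}{2},\frac{c-b-n+1}{2},c-a-n \atop c-b-n,1-b-n,c}\right| 4\right). \]
   Context: For $a\in\mathbb{C}$, $(a)_0=1$ and $(a)_k=a(a+1)\cdots(a+k-1)$ for $k\ge1$. The hypergeometric series is ${}_rF_s\!\left(\left.{\alpha_1,\ldots,\alpha_r\atop \beta_1,\ldots,\beta_s}\right|z\right)=\sum_{k\ge0}\frac{(\alpha_1)_k\cdots(\alpha_r)_k}{k!(\beta_1)_k\cdots(\beta_s)_k}z^k$, with no lower parameter zero or a negative integer; when an upper parameter is $-n$ ($n$ a nonnegative integer) it is a finite sum over $0\le k\le n$. *)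

(* Defs.v *)
From HB Require Import structures.
From mathcomp Require Import all_boot all_order all_algebra.
From mathcomp Require Import complex.
From mathcomp Require Import reals.
Set Implicit Arguments. Unset Strict Implicit. Unset Printing Implicit Defensive.
Import Order.TTheory GRing.Theory Num.Theory.
Local Open Scope ring_scope.

Definition poch {F : comNzRingType} (a : F) (k : nat) : F :=
  \prod_(i < k) (a + i%:R).

(* Terms with k > n vanish since (-n)_k = 0, so this is the full series. *)
Definition hypF_term {F : fieldType} (n : nat) (us ls : seq F) (z : F) (k : nat) : F :=
  poch (- (n%:R)) k * \prod_(u <- us) poch u k
  / (k`!%:R * \prod_(l <- ls) poch l k) * z ^+ k.

Definition hypF {F : fieldType} (n : nat) (us ls : seq F) (z : F) : F :=
  \sum_(k < n.+1) hypF_term n us ls z k.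

Definition lower_ok {F : fieldType} (b : F) : Prop := forall m : nat, b <> - (m%:R).

(* Main.v *)
Require Import Defs.
From HB Require Import structures.
From mathcomp Require Import all_boot all_order all_algebra.
From mathcomp Require Import complex.
From mathcomp Require Import reals.
From mathcomp Require Import ring.
Import Order.TTheory GRing.Theory Num.Theory.
Local Open Scope ring_scope.

Lemma poch0 (F : comNzRingType) (a : F) : poch a 0 = 1.
Proof. by rewrite /poch big_ord0. Qed.

Lemma pochS (F : comNzRingType) (a : F) k : poch a k.+1 = poch a k * (a + k%:R).
Proof. by rewrite /poch big_ord_recr. Qed.

Lemma pochSl (F : comNzRingType) (a : F) k : poch a k.+1 = a * poch (a + 1) k.
Proof.
rewrite /poch big_ord_recl /= addr0; congr (_ * _); apply: eq_bigr => i _.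
rewrite /bump /=; rewrite -addn1 natrD; ring.
Qed.

Lemma poch_add (F : comNzRingType) (a : F) j m :
  poch a (j + m) = poch a j * poch (a + j%:R) m.
Proof.
elim: m => [|m IH]; first by rewrite addn0 poch0 mulr1.
by rewrite addnS !pochS IH natrD; ring.
Qed.

Lemma poch_refl (F : comNzRingType) (y : F) k :
  (-1) ^+ k * poch y k = poch (- y - k%:R + 1) k.
Proof.
elim: k => [|k IH]; first by rewrite !poch0 mulr1.
rewrite [in RHS]pochSl [in LHS]pochS.
have -> : - y - k.+1%:R + 1 + 1 = - y - k%:R + 1 by rewrite -addn1 natrD; ring.
by rewrite -IH -addn1 natrD exprD; ring.
Qed.

Lemma poch_negn (F : comNzRingType) (n k : nat) :
  poch (- n%:R : F) k = (-1) ^+ k * k`!%:R * 'C(n, k)%:R.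
Proof.
elim: k => [|k IH]; first by rewrite poch0 bin0 fact0 !mulr1.
rewrite pochS IH factS natrM.
have h : (k.+1 * 'C(n, k.+1) = (n - k) * 'C(n, k))%N by rewrite mul_bin_left.
have h2 : (k.+1%:R * 'C(n, k.+1)%:R : F) = (n - k)%:R * 'C(n, k)%:R by rewrite -!natrM h.
case: (leqP k n) => hk.
  move: h2; rewrite natrB //= => h2.
  rewrite exprS.
  transitivity (- ((-1) ^+ k * k`!%:R) * (k.+1%:R * 'C(n, k.+1)%:R) : F); last by ring.
  by rewrite h2; ring.
rewrite (bin_small hk) (bin_small (leqW hk)); ring.
Qed.

Lemma poch_neq0 (F : numFieldType) (x : F) m : lower_ok x -> poch x m != 0.
Proof.
move=> hx; elim: m => [|m IH]; first by rewrite poch0 oner_neq0.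
rewrite pochS mulf_neq0 // addr_eq0; apply/eqP; exact: hx.
Qed.

Lemma poch_dbl (F : numFieldType) (x : F) k :
  poch (x / 2) k * poch ((x + 1) / 2) k * 4 ^+ k = poch x k * poch (x + k%:R) k.
Proof.
rewrite -poch_add.
elim: k => [|k IH]; first by rewrite !poch0 !mulr1.
rewrite exprS !addnS addSn !pochS.
transitivity ((poch (x / 2) k * poch ((x + 1) / 2) k * 4 ^+ k) *
   (4 * (x / 2 + k%:R) * ((x + 1) / 2 + k%:R))); first by ring.
rewrite IH -addn1 !natrD; field.
done.
Qed.


Lemma vdm (F : comNzRingType) N (B C : F) :
  \sum_(m < N.+1) 'C(N, m)%:R * (-1) ^+ m * poch B m * poch (C + m%:R) (N - m)
  = poch (C - B) N.
Proof.
elim: N B C => [|N IH] B C.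
  by rewrite big_ord1 /= !poch0 bin0 !mulr1.
have hS1 : \sum_(m < N.+2) 'C(N, m)%:R * (-1) ^+ m * poch B m * poch (C + m%:R) (N.+1 - m)
   = (C + N%:R) * poch (C - B) N.
  rewrite -IH big_ord_recr /= bin_small // mul0r mul0r mul0r addr0 mulr_sumr.
  apply: eq_bigr => i _; have hi : (i <= N)%N by rewrite -ltnS.
  rewrite subSn // pochS natrB //; ring.
have hS2 : \sum_(i < N.+1) 'C(N, i)%:R * (-1) ^+ i.+1 * poch B i.+1 * poch (C + i.+1%:R) (N.+1 - i.+1)
   = - B * poch (C - B) N.
  have -> : C - B = (C + 1) - (B + 1) by ring.
  rewrite -IH mulr_sumr; apply: eq_bigr => i _.
  rewrite subSS pochSl exprS -natr1 addrA [C + 1 + _]addrAC. ring.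
transitivity ((C + N%:R) * poch (C - B) N + - B * poch (C - B) N); last first.
  by rewrite pochS; ring.
rewrite -hS1 -hS2.
rewrite [in RHS]big_ord_recl -addrA -big_split /= big_ord_recl /=.
rewrite !bin0; congr (_ + _); apply: eq_bigr => i _.
rewrite /bump /= binS natrD; ring.
Qed.

Lemma vdm_div (F : numFieldType) N (B C : F) : lower_ok C ->
  \sum_(m < N.+1) 'C(N, m)%:R * (-1) ^+ m * poch B m / poch C m
  = poch (C - B) N / poch C N.
Proof.
move=> hC; rewrite -vdm mulr_suml; apply: eq_bigr => -[i /=]; rewrite ltnS => hi _.
have e : poch C N = poch C i * poch (C + i%:R) (N - i) by rewrite -poch_add subnKC.
have h1 := @poch_neq0 _ C i hC.
have h2 : poch (C + i%:R) (N - i) != 0.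
  by move: (@poch_neq0 _ C N hC); rewrite e mulf_eq0 negb_or => /andP[].
rewrite e; field.
by rewrite h1 h2.
Qed.


Lemma bin_mul_sub n m j :
  ('C(n, m + j) * 'C(m + j, j) = 'C(n, j) * 'C(n - j, m))%N.
Proof.
case: (leqP (m + j) n) => h; last first.
  case: (leqP j n) => hj.
    have hm : (n - j < m)%N by rewrite ltn_subLR // addnC.
    by rewrite (bin_small h) (bin_small hm) mul0n muln0.
  by rewrite (bin_small h) (bin_small hj) mul0n mul0n.
have hj : (j <= n)%N by apply: leq_trans h; exact: leq_addl.
have hm : (m <= n - j)%N by rewrite leq_subRL // addnC.
apply/eqP; rewrite -(@eqn_pmul2r (j`! * m`! * (n - (m + j))`!)); last first.
  by rewrite !muln_gt0 !fact_gt0.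
have e1 := bin_fact h. have e2 := bin_fact (leq_addl m j).
have e3 := bin_fact hj. have e4 := bin_fact hm.
rewrite addnK in e2. rewrite -subnDA addnC in e4.
rewrite -(eqr_nat rat) !natrM.
move/(congr1 (fun x => x%:R : rat)): e1; rewrite !natrM => e1.
move/(congr1 (fun x => x%:R : rat)): e2; rewrite !natrM => e2.
move/(congr1 (fun x => x%:R : rat)): e3; rewrite !natrM => e3.
move/(congr1 (fun x => x%:R : rat)): e4; rewrite !natrM => e4.
apply/eqP.
transitivity ('C(n, m + j)%:R * (('C(m + j, j)%:R * (j`!%:R * m`!%:R)) * (n - (m + j))`!%:R) : rat); first by ring.
rewrite e2 e1.
transitivity ('C(n, j)%:R * (j`!%:R * ('C(n - j, m)%:R * (m`!%:R * (n - (m + j))`!%:R))) : rat); last by ring.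
by rewrite e4 e3.
Qed.


Lemma sum_widen (F : nmodType) k n (f : nat -> F) : (k <= n)%N ->
  (forall j, (k < j)%N -> f j = 0) -> \sum_(j < k.+1) f j = \sum_(j < n.+1) f j.
Proof.
move=> hk hf; rewrite (big_ord_widen n.+1 f) // big_mkcond; apply: eq_bigr => j _.
by case: ifP => // /negbT; rewrite -leqNgt => /hf ->.
Qed.

Lemma lhs_term (F : numFieldType) n (a b c : F) k :
  lower_ok a -> lower_ok (1 + a - c) -> lower_ok c -> (k <= n)%N ->
  hypF_term n [:: a / 2; (a + 1) / 2; b] [:: a; 1 + a - c; c] 4 k =
  \sum_(j < n.+1) (-1) ^+ k * 'C(n, k)%:R * 'C(k, j)%:R * poch b k
                    / (poch (1 + a - c) j * poch c (k - j)).
Proof.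
move=> ha hA hc hk.
have nza := @poch_neq0 _ _ k ha. have nzA := @poch_neq0 _ _ k hA.
have nzc := @poch_neq0 _ _ k hc.
have nzf : (k`!%:R : F) != 0 by rewrite pnatr_eq0 -lt0n fact_gt0.
rewrite /hypF_term !big_cons !big_nil !mulr1 poch_negn.
transitivity (((-1) ^+ k * k`!%:R * 'C(n, k)%:R) *
   (poch (a / 2) k * poch ((a + 1) / 2) k * 4 ^+ k) * poch b k /
   (k`!%:R * (poch a k * (poch (1 + a - c) k * poch c k)))); first by ring.
rewrite poch_dbl.
transitivity ((-1) ^+ k * 'C(n, k)%:R * poch b k / poch c k *
   (poch (a + k%:R) k / poch (1 + a - c) k)).
  by field; rewrite nza nzA nzc nzf.
rewrite (_ : a + k%:R = (1 + a - c) - (1 - c - k%:R)); last by ring.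
rewrite -(@vdm_div _ k (1 - c - k%:R) _ hA) mulr_sumr.
pose f j := (-1) ^+ k * 'C(n, k)%:R * poch b k / poch c k *
    ('C(k, j)%:R * (-1) ^+ j * poch (1 - c - k%:R) j / poch (1 + a - c) j).
rewrite (@sum_widen _ k n f hk); last first.
 move=> j hj; rewrite /f (bin_small hj) mulr0n; ring.
apply: eq_bigr => -[j /= _] _; rewrite /f.
case: (leqP j k) => hj.
  2: by rewrite (bin_small hj) mulr0n; ring.
have ec : poch c k = poch c (k - j) * poch (c + (k - j)%:R) j by rewrite -poch_add subnK.
have r := @poch_refl _ (1 - c - k%:R) j.
rewrite (_ : - (1 - c - k%:R) - j%:R + 1 = c + (k - j)%:R) in r; last by rewrite natrB //; ring.
have nzAj := @poch_neq0 _ _ j hA. have nzck := @poch_neq0 _ _ (k - j) hc.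
have nzcj : poch (c + (k - j)%:R) j != 0.
  by move: nzc; rewrite ec mulf_eq0 negb_or => /andP[].
rewrite ec.
transitivity ((-1) ^+ k * 'C(n, k)%:R * poch b k / (poch c (k - j) * poch (c + (k - j)%:R) j) *
    ('C(k, j)%:R * ((-1) ^+ j * poch (1 - c - k%:R) j) / poch (1 + a - c) j)); first by ring.
rewrite r; field; by rewrite nzAj nzck nzcj.
Qed.

Lemma lhs_inner (F : numFieldType) n (a b c : F) j :
  lower_ok (1 + a - c) -> lower_ok c -> (j <= n)%N ->
  \sum_(k < n.+1) (-1) ^+ k * 'C(n, k)%:R * 'C(k, j)%:R * poch b k
                    / (poch (1 + a - c) j * poch c (k - j))
  = (-1) ^+ j * 'C(n, j)%:R * poch b j * poch (c - b - j%:R) (n - j)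
      / (poch (1 + a - c) j * poch c (n - j)).
Proof.
move=> hA hc hj.
rewrite -(big_mkord (fun _ => true) (fun k : nat => (-1) ^+ k * 'C(n, k)%:R * 'C(k, j)%:R * poch b k
                    / (poch (1 + a - c) j * poch c (k - j)))) (@big_cat_nat _ _ _ j 0 n.+1 _ _ (leq0n j) (leqW hj)) /=.
rewrite big_nat_cond big1 ?add0r; last first.
  by move=> k /andP[/andP[_ hk] _]; rewrite (bin_small hk) mulr0n; ring.
rewrite -{1}(add0n j) big_addn subSn // big_mkord.
have nzA := @poch_neq0 _ _ j hA.
transitivity ((-1) ^+ j * 'C(n, j)%:R * poch b j / poch (1 + a - c) j *
  \sum_(m < (n - j).+1) 'C(n - j, m)%:R * (-1) ^+ m * poch (b + j%:R) m / poch c m).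
  rewrite mulr_sumr; apply: eq_bigr => -[m /= _] _.
  have nzc := @poch_neq0 _ _ m hc.
  rewrite addnK exprD [(m + j)%N]addnC poch_add.
  have e : ('C(n, j + m)%:R * 'C(j + m, j)%:R : F) = 'C(n, j)%:R * 'C(n - j, m)%:R.
    by rewrite -!natrM addnC bin_mul_sub.
  transitivity ((-1) ^+ m * (-1) ^+ j * ('C(n, j + m)%:R * 'C(j + m, j)%:R) *
     (poch b j * poch (b + j%:R) m) / (poch (1 + a - c) j * poch c m)); first by ring.
  rewrite e; field; by rewrite nzA nzc.
rewrite (@vdm_div _ (n - j) (b + j%:R) c hc).
have nzc := @poch_neq0 _ _ (n - j) hc.
rewrite (_ : c - (b + j%:R) = c - b - j%:R); last by ring.
field; by rewrite nzA nzc.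
Qed.

Lemma lhs_eq (F : numFieldType) n (a b c : F) :
  lower_ok a -> lower_ok (1 + a - c) -> lower_ok c ->
  hypF n [:: a / 2; (a + 1) / 2; b] [:: a; 1 + a - c; c] 4 =
  \sum_(j < n.+1) (-1) ^+ j * 'C(n, j)%:R * poch b j * poch (c - b - j%:R) (n - j)
      / (poch (1 + a - c) j * poch c (n - j)).
Proof.
move=> ha hA hc; rewrite /hypF.
rewrite (eq_bigr _ (fun (k : 'I_n.+1) _ => @lhs_term _ n a b c k ha hA hc (ltn_ord k))).
rewrite exchange_big; apply: eq_bigr => -[j /=]; rewrite ltnS => hj _.
exact: lhs_inner.
Qed.


Lemma rhs_term (F : numFieldType) n (a b c : F) k :
  lower_ok (1 + a - c) -> lower_ok c -> lower_ok (c - b - n%:R) ->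
  lower_ok (1 - b - n%:R) -> (k <= n)%N ->
  (-1) ^+ n * poch b n / poch (1 + a - c) n *
  hypF_term n [:: (c - b - n%:R) / 2; (c - b - n%:R + 1) / 2; c - a - n%:R]
           [:: c - b - n%:R; 1 - b - n%:R; c] 4 k =
  (-1) ^+ (n - k) * 'C(n, n - k)%:R * poch b (n - k) * poch (c - b - (n - k)%:R) (n - (n - k))
      / (poch (1 + a - c) (n - k) * poch c (n - (n - k))).
Proof.
move=> hA hc hx hb hk.
set x := c - b - n%:R.
have nzx := @poch_neq0 _ _ k hx. have nzc := @poch_neq0 _ _ k hc.
have nzb := @poch_neq0 _ _ k hb. have nzAn := @poch_neq0 _ _ n hA.
have nzf : (k`!%:R : F) != 0 by rewrite pnatr_eq0 -lt0n fact_gt0.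
rewrite /hypF_term !big_cons !big_nil !mulr1 poch_negn.
transitivity ((-1) ^+ n * poch b n / poch (1 + a - c) n *
   (((-1) ^+ k * k`!%:R * 'C(n, k)%:R) *
   (poch (x / 2) k * poch ((x + 1) / 2) k * 4 ^+ k) * poch (c - a - n%:R) k /
   (k`!%:R * (poch x k * (poch (1 - b - n%:R) k * poch c k))))); first by ring.
rewrite poch_dbl.
set j := (n - k)%N.
have hn : n = (j + k)%N by rewrite subnK.
have hkj : (n - j = k)%N by rewrite subKn.
rewrite hkj bin_sub //.
have eb : poch b n = poch b j * poch (b + j%:R) k by rewrite {1}hn poch_add.
have eA : poch (1 + a - c) n = poch (1 + a - c) j * poch (1 + a - c + j%:R) k
  by rewrite {1}hn poch_add.
have e1 : poch (1 - b - n%:R) k = (-1) ^+ k * poch (b + j%:R) k.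
  by rewrite poch_refl {1}hn natrD; congr poch; ring.
have e2 : poch (c - a - n%:R) k = (-1) ^+ k * poch (1 + a - c + j%:R) k.
  by rewrite poch_refl {1}hn natrD; congr poch; ring.
have ex : x + k%:R = c - b - j%:R by rewrite /x {1}hn natrD; ring.
have nzAj : poch (1 + a - c) j != 0 by apply: poch_neq0.
have nzAjk : poch (1 + a - c + j%:R) k != 0.
  by move: nzAn; rewrite eA mulf_eq0 negb_or => /andP[].
have nzbj : poch (b + j%:R) k != 0.
  by move: nzb; rewrite e1 mulf_eq0 negb_or => /andP[].
rewrite ex eb eA e1 e2 {1}hn exprD.
rewrite -!(signr_odd _ k); case: (odd k); rewrite ?expr0 ?expr1;
  field; by rewrite nzAj nzAjk nzbj nzx nzc nzf.
Qed.

From mathcomp Require Import complex.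
From mathcomp Require Import reals.
Local Open Scope complex_scope.

Theorem proposition3p3 (R : realType) (n : nat) (a b c : R[i])
  (ha : lower_ok a) (hac : lower_ok (1 + a - c)) (hc : lower_ok c)
  (hcbn : lower_ok (c - b - n%:R)) (hbn : lower_ok (1 - b - n%:R)) :
  hypF n [:: a / 2; (a + 1) / 2; b] [:: a; 1 + a - c; c] 4
  = (-1) ^+ n * poch b n / poch (1 + a - c) n *
    hypF n [:: (c - b - n%:R) / 2; (c - b - n%:R + 1) / 2; c - a - n%:R]
           [:: c - b - n%:R; 1 - b - n%:R; c] 4.
Proof.
rewrite lhs_eq // /hypF mulr_sumr.
rewrite (eq_bigr _ (fun (k : 'I_n.+1) _ => @rhs_term _ n a b c k hac hc hcbn hbn (ltn_ord k))).
rewrite [RHS](reindex_inj rev_ord_inj) /=; apply: eq_bigr => k _.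
by rewrite subSS subKn // -ltnS.
Qed.
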